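(* Let $k\ge2$ and let $\mathcal C_1$ be the binary code with generator matrix $[I_k\ \tilde G_k]$. Then $\mathcal C_1$ has the Easy Repair Property.
   Context: $\tilde G_k$ denotes the $k\times\frac{k(k-1)}{2}$ binary matrix whose columns are all vectors of $\mathbb F_2^k$ of Hamming weight $2$. Let $g_1,\dots,g_n$ ($n=\frac{k(k+1)}2$) be the columns of $[I_k\ \tilde G_k]$; nodes are coordinates $c_1,\dots,c_n$ of codewords $c=u[I_k\ \tilde G_k]$. An erasure pattern is a set $S^e$ of erased nodes; the others are live. It is correctable if no two distinct codewords coincide on all live positions. A node $c_i$ is related to distinct nodes $c_{j_1},\dots,c_{j_\gamma}$ (all different from $c_i$) if $g_i=g_{j_1}+\dots+g_{j_\gamma}$. An erased node allows for easy repair if it is related to $\gamma\le2$ live nodes. An erasure pattern allows for easy repair if all erased nodes can be recovered by a sequence of easy repairs, where after each step the recovered node is regarded as live. A code has the Easy Repair Property if every correctable erasure pattern allows for easy repair. *)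

(* Defs.v *)
From mathcomp Require Import all_boot all_order all_algebra.
Set Implicit Arguments. Unset Strict Implicit. Unset Printing Implicit Defensive.
Import GRing.Theory.
Local Open Scope ring_scope.

Section Generic.
(* A binary linear code given by generator columns g i : F_2^k (as row vectors),
   indexed by a finite type I of nodes. *)
Variables (I : finType) (k : nat) (g : I -> 'rV['F_2]_k).

Definition codeword (u : 'rV['F_2]_k) (i : I) : 'F_2 := (u *m (g i)^T) 0 0.

Definition correctable (E : {set I}) : Prop :=
  forall u v : 'rV['F_2]_k,
    (forall i, i \notin E -> codeword u i = codeword v i) ->
    forall i, codeword u i = codeword v i.

Definition related (i : I) (S : {set I}) : Prop :=
  i \notin S /\ (0 < #|S|)%N /\ g i = \sum_(j in S) g j.

Definition easy_node (E : {set I}) (i : I) : Prop :=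
  i \in E /\ exists S : {set I}, [/\ S \subset ~: E, (#|S| <= 2)%N & related i S].

Inductive easy_repairable : {set I} -> Prop :=
| ER_done : easy_repairable set0
| ER_step E i : easy_node E i -> easy_repairable (E :\ i) -> easy_repairable E.

Definition easy_repair_property : Prop :=
  forall E : {set I}, correctable E -> easy_repairable E.

End Generic.

(* Nodes of C_1 = [I_k  G~_k]: first the k unit columns, then one column for each
   2-subset of 'I_k (i.e. each weight-2 vector of F_2^k). *)
Definition C1_node (k : nat) : finType :=
  ('I_k + {A : {set 'I_k} | #|A| == 2%N})%type.

Definition C1_col (k : nat) (x : C1_node k) : 'rV['F_2]_k :=
  match x with
  | inl i => \row_j (j == i)%:R
  | inr A => \row_j (j \in val A)%:R
  end.

(* Main.v *)
Require Import Defs.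
From mathcomp Require Import all_boot all_order all_algebra.
Set Implicit Arguments. Unset Strict Implicit. Unset Printing Implicit Defensive.
Import GRing.Theory.
Local Open Scope ring_scope.

Lemma F2_addxx (x : 'F_2) : x + x = 0.
Proof. by case: x => [[|[|]]] //= ?; apply/val_inj. Qed.

Lemma F2_1n0 : (1 : 'F_2) != 0. Proof. by []. Qed.

Definition ends k (n : C1_node k) : {set option 'I_k} :=
  match n with
  | inl i => [set None; Some i]
  | inr A => [set Some x | x in val A]
  end.

Lemma set2C (T : finType) (a b : T) : [set a; b] = [set b; a].
Proof. by apply/setP => v; rewrite !inE orbC. Qed.

Lemma ends2 k (n : C1_node k) : exists x y, x != y /\ ends n = [set x; y].
Proof.
case: n => [i|[A hA]] /=; first by exists None, (Some i).
case/cards2P: hA => x [y [xy ->]].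
exists (Some x), (Some y); split; first by [].
by rewrite imsetU1 imset_set1.
Qed.

Lemma ends_card k (n : C1_node k) : #|ends n| = 2%N.
Proof.
have [x [y [xy ->]]] := ends2 n.
by rewrite cards2 xy.
Qed.

Lemma ends_inj k : injective (@ends k).
Proof.
case=> [i|[A hA]] [j|[B hB]] /= h.
- have: Some i \in [set None; Some j] by rewrite -h !inE eqxx orbT.
  by rewrite !inE => /orP[//|/eqP[->]].
- have: None \in [set Some x | x in B] by rewrite -h !inE.
  by case/imsetP.
- have: None \in [set Some x | x in A] by rewrite h !inE.
  by case/imsetP.
- have e : A = B by apply: (imset_inj (@Some_inj _)).
  by subst B; congr inr; apply: val_inj.
Qed.

Lemma exists_node k (a b : option 'I_k) : a != b -> exists m, ends m = [set a; b].
Proof.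
case: a => [i|]; case: b => [j|] //= ab.
- have hA : #|[set i; j]| == 2%N.
    have ij : i != j by apply: contraNneq ab => ->.
    by rewrite cards2 ij.
  exists (inr (exist _ [set i; j] hA)) => /=.
  by rewrite imsetU1 imset_set1.
- by exists (inl i); rewrite set2C.
- by exists (inl j).
Qed.

Lemma col_ends k (n : C1_node k) : C1_col n = \row_j (Some j \in ends n)%:R.
Proof.
case: n => [i|[A hA]]; apply/rowP => j; rewrite !mxE /=.
- by rewrite !inE.
- by rewrite (mem_imset _ _ (@Some_inj _)).
Qed.

Lemma cw_ends k (u : 'rV['F_2]_k) (n : C1_node k) (f : option 'I_k -> 'F_2) :
  f None = 0 -> (forall j, f (Some j) = u 0 j) ->
  codeword (@C1_col k) u n = \sum_(v in ends n) f v.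
Proof.
move=> f0 fS.
rewrite /codeword col_ends !mxE.
rewrite [in RHS](big_setID [set None]) /=.
rewrite [X in _ = X + _]big1 ?add0r; last by move=> v; rewrite !inE => /andP[_ /eqP->].
have -> : ends n :\: [set None] = [set Some x | x in [set j | Some j \in ends n]].
  apply/setP => v; case: v => [j|].
  - by rewrite !inE (mem_imset _ _ (@Some_inj _)) inE.
  - rewrite !inE /=; apply/esym/negbTE/negP; by case/imsetP.
rewrite big_imset /=; last by move=> a b _ _ [].
rewrite big_set /= [RHS]big_mkcond /=; apply: eq_bigr => j _.
rewrite !mxE fS.
have -> : (j \in (fun i : 'I_k => Some i \in ends n)) = (Some j \in ends n) by [].
by case: (Some j \in ends n); rewrite ?mulr1 ?mulr0.
Qed.

Definition live k (E : {set C1_node k}) : rel (option 'I_k) :=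
  fun a b => [exists n, (n \notin E) && (ends n == [set a; b])].

Lemma live_sym k (E : {set C1_node k}) a b : live E a b = live E b a.
Proof. by rewrite /live set2C. Qed.

Lemma live_neq k (E : {set C1_node k}) a b : live E a b -> a != b.
Proof.
case/existsP => m /andP[_ /eqP hm]; apply/negP => /eqP ab; subst b.
by have := ends_card m; rewrite hm setUid cards1.
Qed.

Lemma correct_connect k (E : {set C1_node k}) n x y :
  correctable (@C1_col k) E -> n \in E -> ends n = [set x; y] -> x != y ->
  connect (live E) x y.
Proof.
move=> hc nE hn xy.
pose C := [set v | connect (live E) x v].
pose F v := ((v \in C)%:R + (None \in C)%:R : 'F_2).
pose u0 := \row_j F (Some j) : 'rV['F_2]_k.
have cw : forall m a b, ends m = [set a; b] -> a != b ->
    codeword (@C1_col k) u0 m = (a \in C)%:R + (b \in C)%:R.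
  move=> m a b hm ab.
  rewrite (@cw_ends _ _ _ F) ?hm; last by move=> j; rewrite mxE.
    rewrite big_setU1 /= ?big_set1; last by rewrite in_set1.
    by rewrite /F addrACA F2_addxx addr0.
  by rewrite /F F2_addxx.
have cw0 : forall m, codeword (@C1_col k) 0 m = 0.
  by move=> m; rewrite /codeword mul0mx mxE.
have ln : forall m, m \notin E -> codeword (@C1_col k) u0 m = 0.
  move=> m mE; have [a [b [ab hm]]] := ends2 m.
  rewrite (cw _ _ _ hm ab).
  have lab : live E a b by apply/existsP; exists m; rewrite mE hm eqxx.
  have lba : live E b a by rewrite live_sym.
  have -> : (a \in C) = (b \in C).
    rewrite !inE; apply/idP/idP => h; apply: (connect_trans h); exact: connect1.
  exact: F2_addxx.
have := hc u0 0 (fun m mE => etrans (ln m mE) (esym (cw0 m))) n.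
rewrite cw0 (cw _ _ _ hn xy).
have -> : x \in C by rewrite inE connect0.
rewrite inE; case: (connect _ x y) => //;
by rewrite addr0 => /eqP; rewrite (negbTE F2_1n0).
Qed.

Lemma walk_easy k (E : {set C1_node k}) N : forall p x y n,
  (size p <= N)%N -> n \in E -> ends n = [set x; y] -> x != y ->
  path (live E) x p -> last x p = y -> exists i, easy_node (@C1_col k) E i.
Proof.
elim: N => [|N IH] [|v1 p] x y n //=; try by move=> _ _ _ xy _ yx; rewrite yx eqxx in xy.
move=> hs nE hn xy /andP[l1 hp].
case: p hs hp => [|v2 p] /=.
  move=> _ _ hy; subst v1.
  case/existsP: l1 => m /andP[mE /eqP hm].
  have e : m = n by apply: ends_inj; rewrite hm hn.
  by rewrite e nE in mE.
move=> hs /andP[l2 hp].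
case: p hs hp => [|v3 q] /=.
  move=> _ _ hy; subst v2.
  have xv1 := live_neq l1; have v1y := live_neq l2.
  case/existsP: l1 => m1 /andP[m1E /eqP hm1].
  case/existsP: l2 => m2 /andP[m2E /eqP hm2].
  exists n; split => //; exists [set m1; m2]; split.
  - by apply/subsetP => m; rewrite !inE => /orP[/eqP->|/eqP->].
  - by rewrite cards2; case: (m1 != m2).
  have m12 : m1 != m2.
    apply/negP => /eqP e; subst m2.
    have : x \in [set v1; y] by rewrite -hm2 hm1 !inE eqxx.
    by rewrite !inE (negbTE xy) (negbTE xv1).
  split; last split.
  - rewrite !inE; apply/negP => /orP[/eqP e|/eqP e]; subst n.
    + by move: m1E; rewrite nE.
    + by move: m2E; rewrite nE.
  - by rewrite cards2 m12.
  rewrite big_setU1 /= ?big_set1; last by rewrite in_set1.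
  rewrite !col_ends hn hm1 hm2; apply/rowP => j; rewrite !mxE !inE.
  move: (Some j) => w.
  case: (eqVneq w v1) => [->|wv1].
    rewrite eq_sym (negbTE xv1) (negbTE v1y) /=.
    by rewrite F2_addxx.
  rewrite ?(negbTE wv1) ?orbF /=.
  case: (eqVneq w x) => [->|wx] /=; last by rewrite add0r.
  by rewrite ?eqxx ?(negbTE xy) ?addr0.
move=> hs /andP[l3 hp] hy.
case: (eqVneq x v2) => [e|xv2].
  subst v2.
  apply: (IH (v3 :: q) x y n) => //=; last by rewrite l3.
  by move: hs; rewrite !ltnS; move/ltnW.
have [m hm] := exists_node xv2.
case: (boolP (m \in E)) => mE.
  apply: (IH [:: v1; v2] x v2 m) => //=; last by rewrite l1 l2.
  by move: hs; rewrite !ltnS => /(leq_trans _); apply.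
apply: (IH (v2 :: v3 :: q) x y n) => //=.
rewrite l3 hp !andbT /=.
by apply/existsP; exists m; rewrite mE hm eqxx.
Qed.

Lemma correctableD k (E : {set C1_node k}) i :
  correctable (@C1_col k) E -> correctable (@C1_col k) (E :\ i).
Proof.
move=> hc u v h; apply: hc => j jE; apply: h.
by rewrite !inE (negbTE jE) andbF.
Qed.

Theorem theorem4p3 (k : nat) (hk : (2 <= k)%N) :
  easy_repair_property (@C1_col k).
Proof.
move=> E.
move: {2}#|E| (leqnn #|E|) => N; elim: N E => [|N IH] E hE hc.
  have -> : E = set0 by apply/cards0_eq; move: hE; rewrite leqn0 => /eqP.
  constructor.
case: (set_0Vmem E) => [->|[n nE]]; first by constructor.
have [x [y [xy hn]]] := ends2 n.
have := correct_connect hc nE hn xy.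
case/connectP => p hp hy.
have [i hi] := walk_easy (leqnn (size p)) nE hn xy hp (esym hy).
apply: (ER_step hi); apply: IH; last exact: correctableD.
move: hE; rewrite (cardsD1 i E) hi.1 add1n ltnS; done.
Qed.
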